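(* Let $(\mathcal A,\Delta)$ be a weak bigraded Batalin-Vilkovisky algebra with bigraded Gerstenhaber bracket $[\cdot,\cdot]$ generated by $\Delta$, and let $\delta$ be an $R$-linear operator on $\mathcal A$ of bidegree $(1,0)$ which is a derivation of degree $1$ of the bigraded $R$-algebra $\mathcal A$. Then the following are equivalent: (i) $\delta[x,y]=[\delta x,y]-(-1)^{|x|}[x,\delta y]$ for all homogeneous $x,y\in\mathcal A$; (ii) the graded commutator $[\delta,\Delta]=\delta\Delta+\Delta\delta$ is a derivation of degree $0$ of the bigraded algebra $\mathcal A$, i.e. $[\delta,\Delta](ab)=([\delta,\Delta]a)b+a([\delta,\Delta]b)$ for all $a,b\in\mathcal A$.
   Context: $R$ is a commutative ring. A bigraded Gerstenhaber algebra is a bigraded commutative $R$-algebra $\mathcal A$ (signs governed by the total degree $|\cdot|$, the sum of the two degrees) with an $R$-bilinear bracket of bidegree $(0,-1)$ which becomes a bigraded Lie bracket when the second degree is lowered by one, such that for $a$ of bidegree $(p,q)$, $[a,\cdot]$ is a derivation of bidegree $(p,q-1)$. An $R$-linear operator $\Delta$ of bidegree $(0,-1)$ generates the bracket if $[a,b]=(-1)^{|a|}\big(\Delta(ab)-(\Delta a)b-(-1)^{|a|}a(\Delta b)\big)$ for all homogeneous $a,b$. A weak bigraded Batalin-Vilkovisky algebra is a bigraded Gerstenhaber algebra together with such a generator. *)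

(* Defs.v *)
From mathcomp Require Import all_boot all_order all_algebra.
Set Implicit Arguments. Unset Strict Implicit. Unset Printing Implicit Defensive.
Import GRing.Theory.
Local Open Scope ring_scope.

Definition ksgn (z : int) : int := (-1) ^+ `|z|%N.

Section BV.
Variables (R : comPzRingType) (A : lalgType R).
(* H p q x  <->  x is homogeneous of bidegree (p,q); total degree p+q. *)
Variable H : int -> int -> A -> Prop.

Definition homog (x : A) := exists p q, H p q x.

Definition rlinear (f : A -> A) : Prop :=
  forall (c : R) (u v : A), f (c *: u + v) = c *: f u + f v.

Definition bigraded_comm_algebra : Prop :=
  [/\ (forall p q, H p q 0 /\
         forall (c : R) u v, H p q u -> H p q v -> H p q (c *: u + v)),
      (forall a : A, exists s : seq ((int * int) * A),
           (forall i, i \in s -> H i.1.1 i.1.2 i.2) /\ a = \sum_(i <- s) i.2),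
      (forall s : seq ((int * int) * A), uniq (map fst s) ->
           (forall i, i \in s -> H i.1.1 i.1.2 i.2) ->
           \sum_(i <- s) i.2 = 0 -> forall i, i \in s -> i.2 = 0),
      H 0 0 1 /\
      (forall p q p' q' x y, H p q x -> H p' q' y -> H (p + p') (q + q') (x * y))
    & (forall p q p' q' x y, H p q x -> H p' q' y ->
         x * y = (y * x) *~ ksgn ((p + q) * (p' + q')))].

Definition gerstenhaber_bracket (br : A -> A -> A) : Prop :=
  [/\ (forall x, rlinear (br x)) /\ (forall y, rlinear (br^~ y)),
      (forall p q p' q' x y, H p q x -> H p' q' y ->
         H (p + p') (q + q' - 1) (br x y)),
      (forall p q p' q' x y, H p q x -> H p' q' y ->
         br x y = - (br y x *~ ksgn ((p + q - 1) * (p' + q' - 1)))),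
      (forall p q p' q' x y z, H p q x -> H p' q' y -> homog z ->
         br x (br y z) = br (br x y) z +
                         br y (br x z) *~ ksgn ((p + q - 1) * (p' + q' - 1)))
    &
      (forall p q p' q' x y z, H p q x -> H p' q' y -> homog z ->
         br x (y * z) = br x y * z + (y * br x z) *~ ksgn ((p + q - 1) * (p' + q')))].

Definition generates (br : A -> A -> A) (Delta : A -> A) : Prop :=
  [/\ rlinear Delta,
      (forall p q x, H p q x -> H p (q - 1) (Delta x))
    & (forall p q a b, H p q a -> homog b ->
         br a b = (Delta (a * b) - Delta a * b
                   - (a * Delta b) *~ ksgn (p + q)) *~ ksgn (p + q))].

Definition weak_bigraded_BV (br : A -> A -> A) (Delta : A -> A) : Prop :=
  [/\ bigraded_comm_algebra, gerstenhaber_bracket br & generates br Delta].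

Definition derivation_bideg10 (d : A -> A) : Prop :=
  [/\ rlinear d,
      (forall p q x, H p q x -> H (p + 1) q (d x))
    & (forall p q a b, H p q a -> homog b ->
         d (a * b) = d a * b + (a * d b) *~ ksgn (p + q))].

End BV.

(* Main.v *)
Require Import Defs.
From mathcomp Require Import all_boot all_order all_algebra ssrAC.
Import GRing.Theory.
Local Open Scope ring_scope.

Lemma ksgn_dich z : ksgn z = 1 \/ ksgn z = -1.
Proof. rewrite /ksgn -signr_odd; case: (odd _); [right|left]; by rewrite ?expr1 ?expr0. Qed.

Lemma ksgnS z : ksgn (z + 1) = - ksgn z.
Proof.
rewrite /ksgn -[in RHS]signr_odd -signr_odd.
have : odd (absz (z + 1)) = ~~ odd (absz z).
  case: z => [n|n].
  - by rewrite -PoszD addn1 /= .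
  - rewrite NegzE. have -> : - (n.+1)%:Z + 1 = - (n%:Z). by rewrite -addn1 PoszD opprD addrK.
    rewrite abszN /=. by rewrite negbK.
move=> ->; case: (odd _); by rewrite /= ?expr1 ?expr0 ?opprK.
Qed.

Lemma ksgnP z : ksgn (z - 1) = - ksgn z.
Proof. by rewrite -[in RHS](subrK 1 z) ksgnS opprK. Qed.

Section S.
Variables (R : comPzRingType) (A : lalgType R) (H : int -> int -> A -> Prop).

Lemma rlin_add {f} : @rlinear R A f -> forall u v, f (u + v) = f u + f v.
Proof. move=> hf u v. have := hf 1 u v. by rewrite !scale1r. Qed.
Lemma rlin_0 {f} : @rlinear R A f -> f 0 = 0.
Proof. move=> hf; apply: (addrI (f 0)); by rewrite addr0 -(rlin_add hf) addr0. Qed.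
Lemma rlin_N {f} : @rlinear R A f -> forall u, f (- u) = - f u.
Proof. move=> hf u; apply/eqP; rewrite -subr_eq0 opprK -rlin_add // addNr. by rewrite rlin_0. Qed.
Lemma rlin_sum {f} : @rlinear R A f -> forall (I : Type) (s : seq I) (F : I -> A),
  f (\sum_(i <- s) F i) = \sum_(i <- s) f (F i).
Proof. move=> hf I s F; elim: s => [|x s IH]; first by rewrite !big_nil rlin_0.
by rewrite !big_cons rlin_add // IH. Qed.

Variables (br : A -> A -> A) (Delta delta : A -> A).
Hypothesis hG : generates H br Delta.
Hypothesis hd : derivation_bideg10 H delta.

Lemma core p q a b : H p q a -> homog H b ->
  let D := fun z => delta (Delta z) + Delta (delta z) in
  delta (br a b) - (br (delta a) b - br a (delta b) *~ ksgn (p + q))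
  = (D (a * b) - (D a * b + a * D b)) *~ ksgn (p + q).
Proof.
move=> Ha Hb D; case: hG => DL DH Gen; case: hd => dL dH dDer.
have Hdb : homog H (delta b) by case: Hb => p' [q' h]; exists (p' + 1), q'; exact: dH h.
have HDb : homog H (Delta b) by case: Hb => p' [q' h]; exists p', (q' - 1); exact: DH h.
have G1 := Gen _ _ _ _ Ha Hb.
have G2 := Gen _ _ _ _ (dH _ _ _ Ha) Hb.
have G3 := Gen _ _ _ _ Ha Hdb.
have E2 := dDer _ _ _ _ (DH _ _ _ Ha) Hb.
have E3 := dDer _ _ _ _ Ha HDb.
have E4 := dDer _ _ _ _ Ha Hb.
rewrite [p + 1 + q]addrAC ksgnS in G2. rewrite [p + (q - 1)]addrA ksgnP in E2.
rewrite /D G1 G2 G3 E4.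
case: (ksgn_dich (p + q)) => e; rewrite e in G1 G2 G3 E2 E3 E4 *;
  rewrite ?opprK ?mulrN1z ?mulr1z in G1 G2 G3 E2 E3 E4 *;
  rewrite !(rlin_add dL, rlin_N dL, rlin_add DL, rlin_N DL) E2 E3 ?mulrN1z ?mulr1z ?opprK ?mulr1n;
  rewrite ?(mulrDl, mulrDr);
  apply/eqP; rewrite -subr_eq0 !opprD !opprK !addrA; apply/eqP.
all: rewrite (@GRing.add A).[ACl ((1*12)*(2*15)*(3*10)*(4*8)*(5*17)*(6*13)*(7*16)*(9*14)*(11*18))%AC].
all: by rewrite ?(addrN, addNr, add0r).
Qed.
End S.


Theorem lemma5p4p2 (R : comPzRingType) (A : lalgType R)
    (H : int -> int -> A -> Prop) (br : A -> A -> A) (Delta delta : A -> A) :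
  weak_bigraded_BV H br Delta ->
  derivation_bideg10 H delta ->
  ((forall p q x y, H p q x -> homog H y ->
      delta (br x y) = br (delta x) y - br x (delta y) *~ ksgn (p + q))
   <->
   (forall a b : A,
      let D := fun z => delta (Delta z) + Delta (delta z) in
      D (a * b) = D a * b + a * D b)).
Proof.
move=> [[_ Hdec _ _ _] _ hG] hd.
have hc := @core _ _ _ _ _ _ hG hd.
have [DL _ _] := hG; have [dL _ _] := hd.
split.
- move=> Hi.
  have hom : forall p q a b, H p q a -> homog H b ->
      delta (Delta (a * b)) + Delta (delta (a * b)) =
      (delta (Delta a) + Delta (delta a)) * b + a * (delta (Delta b) + Delta (delta b)).
    move=> p q a b Ha Hb; have /= := hc _ _ _ _ Ha Hb.
    rewrite (Hi _ _ _ _ Ha Hb) subrr => /esym/eqP.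
    have [] := ksgn_dich (p + q) => ->; rewrite ?mulr1z ?mulrN1z ?oppr_eq0 subr_eq0 => /eqP //.
  pose D := fun z => delta (Delta z) + Delta (delta z).
  have Dsum : forall (I : Type) (s : seq I) (F : I -> A),
      D (\sum_(i <- s) F i) = \sum_(i <- s) D (F i).
    by move=> I s F; rewrite /D !(rlin_sum _ _ dL, rlin_sum _ _ DL) -big_split.
  move=> a b; change (D (a * b) = D a * b + a * D b).
  have [sa [hsa ->]] := Hdec a; have [sb [hsb ->]] := Hdec b.
  have -> : D ((\sum_(i <- sa) i.2) * (\sum_(j <- sb) j.2)) =
      \sum_(i <- sa) \sum_(j <- sb) D (i.2 * j.2).
    by rewrite mulr_suml Dsum; apply: eq_bigr => i _; rewrite mulr_sumr Dsum.
  have -> : D (\sum_(i <- sa) i.2) * (\sum_(j <- sb) j.2) =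
      \sum_(i <- sa) \sum_(j <- sb) D i.2 * j.2.
    by rewrite Dsum mulr_suml; apply: eq_bigr => i _; rewrite mulr_sumr.
  have -> : (\sum_(i <- sa) i.2) * D (\sum_(j <- sb) j.2) =
      \sum_(i <- sa) \sum_(j <- sb) i.2 * D j.2.
    by rewrite Dsum mulr_suml; apply: eq_bigr => i _; rewrite mulr_sumr.
  rewrite -big_split; apply: eq_big_seq => i hi; rewrite -big_split; apply: eq_big_seq => j hj.
  have hj2 : homog H j.2.
    rewrite /homog. exists j.1.1, j.1.2. exact: (hsb j hj).
  rewrite /D; exact: (hom _ _ _ _ (hsa i hi) hj2).
- move=> hii p q x y Hx Hy; have /= := hc _ _ _ _ Hx Hy.
  rewrite (hii x y) subrr mul0rz => /eqP; rewrite subr_eq0 => /eqP //.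
Qed.
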